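(* Let $d,r\ge2$. The subset $\mathcal P=\bigcap_{n\in S}\mathcal H_{W(n),-1}\subseteq(\mathcal M_{d,r})_{\mathbb R}$ is compact, and for every $i\in[r]$ its chart image $\pi_i(\mathcal P)\subseteq M^{(i)}_{d,r}\otimes\mathbb R$ is an integral (lattice) polytope. Consequently $\mathcal P$ is an integral PL polytope which is chart-Gorenstein–Fano.
   Context: The polyptych lattice $\mathcal M_{d,r}$ over $\mathbb Z$: coordinates $(\mathbf u,\mathbf w)\in\mathbb Z^d\times\mathbb Z^r$; charts $M^{(i)}_{d,r}=\{w_i=0\}$, $i\in[r]$; mutations $\mu_{i,i+1}(\mathbf u,\mathbf w)=(\mathbf u,w_1,\dots,w_{i-1},\min_ju_j-\sum_kw_k,0,w_{i+2},\dots,w_r)$, others by composition/inversion; $(\mathcal M_{d,r})_{\mathbb R}$ uses the same formulas on $\mathbb R$-coordinates, with chart maps $\pi_i$. $\mathbf 1$ is the all-ones vector, $\varepsilon_j$ standard basis vectors. $\mathbb M_{d,r}=\{(\mathbf u,\mathbf w):\min_ju_j=0\}$ is identified with elements via $\varphi_i(\mathbf u,\mathbf w)=(\mathbf u+\langle\mathbf 1,\mathbf w\rangle\mathbf 1,\mathbf w)$ with $i$-th $\mathbf w$-coordinate set to $0$; $\varphi_i^{-1}(\mathbf u,\mathbf w)=(\mathbf u-\min(\mathbf u)\mathbf 1,\mathbf w+(\min(\mathbf u)-\langle\mathbf 1,\mathbf w\rangle)\varepsilon_i)$, which makes sense over $\mathbb R$. $T_{d,r}=\{(\mathbf a,\mathbf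 b)\in\mathbb Z^d\times\mathbb Z^r:\sum_ja_j=\min_ib_i\}$; for $(\mathbf a,\mathbf b)\in T_{d,r}$ the point $f_{\mathbf a,\mathbf b}$ of $\mathcal M_{d,r}$ is given in chart $i$ (over $\mathbb R$) by $x\mapsto\langle\mathbf a,\mathbf u'\rangle+\langle\mathbf b,\mathbf w'\rangle$ where $(\mathbf u',\mathbf w')=\varphi_i^{-1}(x)$. The same constructions with $d,r$ swapped give $\mathcal M_{r,d}$, $\mathbb M_{r,d}$, charts $M^{(i)}_{r,d}$ (coordinates $(\mathbf y,\mathbf z)\in\mathbb Z^r\times\mathbb Z^d$, $z_i=0$), maps $\varphi_i$. For $n=(\mathbf y,\mathbf z)\in\mathbb M_{r,d}$ put $\mathsf v_{r,d}(n)=(\mathbf z,\mathbf y+\langle\mathbf 1,\mathbf z\rangle\mathbf 1)\in T_{d,r}$ and $W(n)=f_{\mathsf v_{r,d}(n)}$, a point of $\mathcal M_{d,r}$. PL half-space: $\mathcal H_{p,a}=\{m\in(\mathcal M_{d,r})_{\mathbb R}:p(m)\ge a\}$. Let $S^{(1)}\subseteq M^{(1)}_{r,d}$ be $\{(\varepsilon_1,\mathbf 0),\dots,(\varepsilon_r,\mathbf 0),\pm(\mathbf 1,\mathbf 0),\pm(\mathbf 1,\varepsilon_2),\dots,\pm(\mathbf 1,\varepsilon_d)\}$ (first component in $\mathbb Z^r$, second in $\mathbb Z^d$), and $S=\varphi_1^{-1}(S^{(1)})\subseteq\mathbb M_{r,d}$. A PL polytope is a compact finite intersection of PL half-spaces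 (with integer points and parameters); it is integral if every chart image is a lattice polytope; it is chart-Gorenstein–Fano if it is integral and of the form $\bigcap_i\mathcal H_{p_i,-1}$ with $p_i$ points. *)

(* Defs.v *)
From HB Require Import structures.
From mathcomp Require Import all_boot all_order all_algebra.
From mathcomp Require Import all_classical all_reals all_analysis.
Set Implicit Arguments. Unset Strict Implicit. Unset Printing Implicit Defensive.
Import Order.TTheory GRing.Theory Num.Theory.
Local Open Scope ring_scope.
Import numFieldNormedType.Exports.
Local Open Scope classical_set_scope.

Section Polyptych.
Variable R : realType.

(* Vectors of R^n are row vectors 'rV[R]_n; coordinates are 0-indexed,
   so the paper's index k in [n] is the nat k-1 here. *)

Definition eps (n k : nat) : 'rV[R]_n := \row_(j < n) ((j : nat) == k)%:R.
Definition ones (n : nat) : 'rV[R]_n := const_mx 1.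
Definition dotv (n : nat) (x y : 'rV[R]_n) : R := \sum_(j < n) x 0 j * y 0 j.

(* minimum of the coordinates of a vector (0 for the empty vector) *)
Definition vmin (n : nat) (u : 'rV[R]_n) : R :=
  oapp (fun j0 => \big[Num.min/u 0 j0]_(j < n) u 0 j) 0 [pick j : 'I_n].

Definition int_vec (n : nat) (x : 'rV[R]_n) : Prop :=
  forall j : 'I_n, x 0 j \is a Num.int.
Definition int_pt (p q : nat) (x : 'rV[R]_p * 'rV[R]_q) : Prop :=
  int_vec x.1 /\ int_vec x.2.

Definition zero_at (n k : nat) (w : 'rV[R]_n) : 'rV[R]_n :=
  \row_(j < n) (if (j : nat) == k then 0 else w 0 j).

Definition MM (p q : nat) : set ('rV[R]_p * 'rV[R]_q) :=
  [set x | vmin x.1 = 0].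

(* phi_i (chart index i, 0-indexed) and its inverse, generic in (p,q) so
   that they serve both M_{d,r} and M_{r,d} *)
Definition phi (p q : nat) (i : nat) (x : 'rV[R]_p * 'rV[R]_q)
  : 'rV[R]_p * 'rV[R]_q :=
  (x.1 + dotv (ones q) x.2 *: ones p, zero_at i x.2).
Definition phiinv (p q : nat) (i : nat) (x : 'rV[R]_p * 'rV[R]_q)
  : 'rV[R]_p * 'rV[R]_q :=
  (x.1 - vmin x.1 *: ones p, x.2 + (vmin x.1 - dotv (ones q) x.2) *: eps q i).

Definition inT (d r : nat) (ab : 'rV[R]_d * 'rV[R]_r) : Prop :=
  dotv (ones d) ab.1 = vmin ab.2.

Definition is_point (d r : nat) (ab : 'rV[R]_d * 'rV[R]_r) : Prop :=
  int_pt ab /\ inT ab.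

Definition fchart (d r : nat) (ab : 'rV[R]_d * 'rV[R]_r) (i : nat)
  (x : 'rV[R]_d * 'rV[R]_r) : R :=
  let y := phiinv i x in dotv ab.1 y.1 + dotv ab.2 y.2.

Definition fval (d r : nat) (ab : 'rV[R]_d * 'rV[R]_r)
  (m : 'rV[R]_d * 'rV[R]_r) : R := fchart ab 0 (phi 0 m).

Definition Hsp (d r : nat) (ab : 'rV[R]_d * 'rV[R]_r) (a : R)
  : set ('rV[R]_d * 'rV[R]_r) := [set m | MM m /\ a <= fval ab m].

Definition Hcap (d r : nat) (L : seq (('rV[R]_d * 'rV[R]_r) * R))
  : set ('rV[R]_d * 'rV[R]_r) :=
  [set m | MM m /\ forall pa, pa \in L -> Hsp pa.1 pa.2 m].

Definition vrd (r d : nat) (n : 'rV[R]_r * 'rV[R]_d) : 'rV[R]_d * 'rV[R]_r :=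
  (n.2, n.1 + dotv (ones d) n.2 *: ones r).

Definition S1 (r d : nat) : seq ('rV[R]_r * 'rV[R]_d) :=
  [seq (eps r k, 0) | k <- iota 0 r]
  ++ [:: (ones r, 0); (- ones r, 0)]
  ++ flatten [seq [:: (ones r, eps d j); (- ones r, - eps d j)]
             | j <- iota 1 d.-1].
Definition Sset (r d : nat) : seq ('rV[R]_r * 'rV[R]_d) :=
  map (phiinv 0) (S1 r d).

Definition Pset (d r : nat) : set ('rV[R]_d * 'rV[R]_r) :=
  Hcap [seq (vrd n, -1) | n <- Sset r d].

Definition conv (d r : nat) (s : seq ('rV[R]_d * 'rV[R]_r))
  : set ('rV[R]_d * 'rV[R]_r) :=
  [set x | exists l : 'I_(size s) -> R,
     (forall k, 0 <= l k) /\ \sum_k l k = 1 /\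
     x = (\sum_k l k *: (nth (0, 0) s k).1, \sum_k l k *: (nth (0, 0) s k).2)].

Definition lattice_polytope (d r : nat) (A : set ('rV[R]_d * 'rV[R]_r)) : Prop :=
  exists s : seq ('rV[R]_d * 'rV[R]_r),
    (forall x, x \in s -> int_pt x) /\ A = conv s.

Definition PL_polytope (d r : nat) (A : set ('rV[R]_d * 'rV[R]_r)) : Prop :=
  compact A /\
  exists L : seq (('rV[R]_d * 'rV[R]_r) * R),
    (forall pa, pa \in L -> is_point pa.1 /\ pa.2 \is a Num.int) /\
    A = Hcap L.

Definition integral_PL_polytope (d r : nat) (A : set ('rV[R]_d * 'rV[R]_r))
  : Prop :=
  PL_polytope A /\ forall i : 'I_r, lattice_polytope (phi i @` A).

Definition chart_GF (d r : nat) (A : set ('rV[R]_d * 'rV[R]_r)) : Prop :=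
  integral_PL_polytope A /\
  exists L : seq ('rV[R]_d * 'rV[R]_r),
    (forall p, p \in L -> is_point p) /\ A = Hcap [seq (p, -1) | p <- L].

End Polyptych.

(* Main.v *)
Require Import Defs.
From HB Require Import structures.
From mathcomp Require Import all_boot all_order all_algebra.
From mathcomp Require Import all_classical all_reals all_analysis.
From mathcomp Require Import ring lra.
Import Order.TTheory GRing.Theory Num.Theory.
Local Open Scope ring_scope.
Import numFieldNormedType.Exports.
Local Open Scope classical_set_scope.
Set Implicit Arguments. Unset Strict Implicit. Unset Printing Implicit Defensive.
Section Aux.
Variable R : realType.
Implicit Types (n : nat).

Lemma vmin_le n (u : 'rV[R]_n) (j : 'I_n) : vmin u <= u 0 j.
Proof.
rewrite /vmin; case: pickP => [j0 _|h]; last by have := h j.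
exact: bigmin_le.
Qed.

Lemma vmin_ex n (u : 'rV[R]_n) : (0 < n)%N -> exists j : 'I_n, vmin u = u 0 j.
Proof.
move=> n0; rewrite /vmin; case: pickP => [j0 _|h]; last by have := h (Ordinal n0).
apply: (@big_ind _ (fun y => exists j, y = u 0 j)) => [|x y [i ->] [k ->]|i _]; [by exists j0| |by exists i].
by case: (leP (u 0 i) (u 0 k)) => _; [exists i|exists k].
Qed.

Lemma vmin_geP n (u : 'rV[R]_n) c : (0 < n)%N ->
  (c <= vmin u) <-> (forall j, c <= u 0 j).
Proof.
move=> n0; split => [h j|h]; first exact: le_trans h (vmin_le _ _).
by have [j ->] := vmin_ex u n0.
Qed.

Lemma vmin_eq n (u : 'rV[R]_n) c (j : 'I_n) :
  (forall k, c <= u 0 k) -> u 0 j = c -> vmin u = c.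
Proof.
move=> h e; apply/eqP; rewrite eq_le; apply/andP; split.
  by rewrite -e vmin_le.
have n0 : (0 < n)%N by apply: leq_ltn_trans (ltn_ord j).
by apply/vmin_geP.
Qed.

Lemma vmin_shift n (u : 'rV[R]_n) c : (0 < n)%N ->
  vmin (u + c *: ones R n) = vmin u + c.
Proof.
move=> n0; have [j hj] := vmin_ex u n0.
apply: (@vmin_eq _ _ _ j) => [k|]; rewrite /ones !mxE mulr1.
  by rewrite lerD2r vmin_le.
by rewrite hj.
Qed.

Lemma dotvE n (x y : 'rV[R]_n) : dotv x y = \sum_j x 0 j * y 0 j.
Proof. by []. Qed.

Lemma dotv_eps_r n (x : 'rV[R]_n) (j : 'I_n) : dotv x (eps R n j) = x 0 j.
Proof.
rewrite /dotv (bigD1 j) //= big1 => [|k kj]; rewrite /eps !mxE.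
  by rewrite eqxx mulr1 addr0.
by rewrite (_ : (k : nat) == j = false) ?mulr0 //; apply/negbTE.
Qed.

Lemma dotv_eps_l n (x : 'rV[R]_n) (j : 'I_n) : dotv (eps R n j) x = x 0 j.
Proof.
rewrite /dotv (bigD1 j) //= big1 => [|k kj]; rewrite /eps !mxE.
  by rewrite eqxx mul1r addr0.
by rewrite (_ : (k : nat) == j = false) ?mul0r //; apply/negbTE.
Qed.

Lemma dotv_ones_l n (x : 'rV[R]_n) : dotv (ones R n) x = \sum_j x 0 j.
Proof. by apply: eq_bigr => j _; rewrite /ones mxE mul1r. Qed.

Lemma dotv_ones_r n (x : 'rV[R]_n) : dotv x (ones R n) = \sum_j x 0 j.
Proof. by apply: eq_bigr => j _; rewrite /ones mxE mulr1. Qed.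

Lemma dotvDl n (x y z : 'rV[R]_n) : dotv (x + y) z = dotv x z + dotv y z.
Proof. by rewrite /dotv -big_split; apply: eq_bigr => j _; rewrite mxE mulrDl. Qed.

Lemma dotvDr n (x y z : 'rV[R]_n) : dotv z (x + y) = dotv z x + dotv z y.
Proof. by rewrite /dotv -big_split; apply: eq_bigr => j _; rewrite mxE mulrDr. Qed.

Lemma dotvZl n (x y : 'rV[R]_n) c : dotv (c *: x) y = c * dotv x y.
Proof. by rewrite /dotv mulr_sumr; apply: eq_bigr => j _; rewrite mxE mulrA. Qed.

Lemma dotvZr n (x y : 'rV[R]_n) c : dotv x (c *: y) = c * dotv x y.
Proof. by rewrite /dotv mulr_sumr; apply: eq_bigr => j _; rewrite mxE mulrCA. Qed.

Lemma dotvNl n (x y : 'rV[R]_n) : dotv (- x) y = - dotv x y.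
Proof. by rewrite -scaleN1r dotvZl mulN1r. Qed.

Lemma dotvNr n (x y : 'rV[R]_n) : dotv x (- y) = - dotv x y.
Proof. by rewrite -scaleN1r dotvZr mulN1r. Qed.

Lemma dotv0l n (y : 'rV[R]_n) : dotv 0 y = 0.
Proof. by rewrite /dotv big1 // => j _; rewrite mxE mul0r. Qed.

Lemma dotv0r n (y : 'rV[R]_n) : dotv y 0 = 0.
Proof. by rewrite /dotv big1 // => j _; rewrite mxE mulr0. Qed.

Lemma sum_zero_at n (w : 'rV[R]_n) (i : 'I_n) :
  \sum_j zero_at i w 0 j = \sum_j w 0 j - w 0 i.
Proof.
rewrite (bigD1 i) //= [in RHS](bigD1 i) //= /zero_at mxE eqxx add0r addrAC subrr add0r.
by apply: eq_bigr => j ji; rewrite mxE (_ : (j : nat) == i = false) //; apply/negbTE.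
Qed.

End Aux.
Section Aux2.
Variable R : realType.
Implicit Types (n : nat).

Lemma vmin_eps n k : (1 < n)%N -> (k < n)%N -> vmin (eps R n k) = 0.
Proof.
move=> n1 kn; have n0 : (0 < n)%N by apply: ltn_trans n1.
pose j : 'I_n := if k == 0%N then Ordinal n1 else Ordinal n0.
apply: (@vmin_eq _ _ _ _ j) => [l|]; rewrite /eps mxE; first by rewrite ler0n.
by rewrite /j; case: (k =P 0%N) => [->|/eqP k0] //=; rewrite eq_sym (negbTE k0).
Qed.

Lemma vmin_ones n : (0 < n)%N -> vmin (ones R n) = 1.
Proof. by move=> n0; apply: (@vmin_eq _ _ _ _ (Ordinal n0)) => [l|]; rewrite /ones mxE. Qed.

Lemma vmin_Nones n : (0 < n)%N -> vmin (- ones R n) = -1.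
Proof.
by move=> n0; apply: (@vmin_eq _ _ _ _ (Ordinal n0)) => [l|]; rewrite /ones !mxE.
Qed.

Lemma sum_eps n k : (k < n)%N -> \sum_j eps R n k 0 j = 1.
Proof.
move=> kn; have := dotv_ones_l (eps R n (Ordinal kn)); rewrite dotv_eps_r /eps mxE /=.
by move/esym.
Qed.

Lemma phiinv_phi0 d r (m : 'rV[R]_d * 'rV[R]_r) : (0 < d)%N -> (0 < r)%N ->
  vmin m.1 = 0 -> phiinv 0 (phi 0 m) = m.
Proof.
case: m => u w d0 r0 /= hu; rewrite /phi /phiinv /=.
rewrite vmin_shift // hu add0r addrK; congr pair.
have := sum_zero_at w (Ordinal r0) => /= hs.
rewrite !dotv_ones_l hs opprB addrCA subrr addr0.
apply/rowP => l; rewrite !mxE /=.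
case: (_ =P _) => [h|_]; last by rewrite mulr0 addr0.
by rewrite mulr1 add0r; congr (w 0 _); apply: val_inj; rewrite /= h.
Qed.

Lemma fval_MM d r (ab m : 'rV[R]_d * 'rV[R]_r) : (0 < d)%N -> (0 < r)%N ->
  MM m -> fval ab m = dotv ab.1 m.1 + dotv ab.2 m.2.
Proof. by move=> d0 r0 hm; rewrite /fval /fchart phiinv_phi0. Qed.

Lemma vrd_phiinv r d (y : 'rV[R]_r * 'rV[R]_d) : (0 < d)%N ->
  vrd (phiinv 0 y) = (y.2 + (vmin y.1 - dotv (ones R d) y.2) *: eps R d 0, y.1).
Proof.
move=> d0; rewrite /vrd /phiinv /=; congr pair.
rewrite dotvDr dotvZr [dotv _ (eps _ _ _)]dotv_ones_l (sum_eps d0) mulr1 addrCA subrr addr0.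
by rewrite subrK.
Qed.

End Aux2.
Section Aux3.
Variable R : realType.

Definition PC d r (m : 'rV[R]_d * 'rV[R]_r) : Prop :=
  [/\ vmin m.1 = 0, (forall k, -1 <= m.2 0 k) &
      (forall j, -1 <= m.1 0 j + \sum_k m.2 0 k <= 1)].

Lemma S1_in r d (y : 'rV[R]_r * 'rV[R]_d) : y \in S1 R r d ->
  (vrd (phiinv 0 y), -1 : R) \in [seq (vrd n, -1 : R) | n <- Sset R r d].
Proof.
by move=> hy; apply/mapP; exists (phiinv 0 y) => //; apply: map_f.
Qed.

Lemma val_y d r (y : 'rV[R]_r * 'rV[R]_d) m (d0 : (0 < d)%N) (r0 : (0 < r)%N) :
  MM m -> fval (vrd (phiinv 0 y)) m =
  dotv y.2 m.1 + (vmin y.1 - dotv (ones R d) y.2) * m.1 0 (Ordinal d0) + dotv y.1 m.2.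
Proof.
move=> hm; rewrite fval_MM // vrd_phiinv //= dotvDl dotvZl.
by rewrite (_ : eps R d 0 = eps R d (Ordinal d0)) // dotv_eps_l.
Qed.

Lemma dotv_ones_eps n (j : 'I_n) : dotv (ones R n) (eps R n j) = 1.
Proof. by rewrite dotv_eps_r /ones mxE. Qed.

Lemma Pset_iff d r (m : 'rV[R]_d * 'rV[R]_r) : (1 < d)%N -> (1 < r)%N ->
  Pset m <-> PC m.
Proof.
move=> d1 r1; have d0 : (0 < d)%N by apply: ltn_trans d1.
have r0 : (0 < r)%N by apply: ltn_trans r1.
case: m => u w; split.
- move=> [hm H].
  have Hy y : y \in S1 R r d -> -1 <= dotv y.2 u +
      (vmin y.1 - dotv (ones R d) y.2) * u 0 (Ordinal d0) + dotv y.1 w.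
    by move=> /S1_in /H [_]; rewrite val_y.
  split => //=.
  + move=> k; have := Hy (eps R r k, 0); rewrite /= dotv0l vmin_eps // dotv0r.
    rewrite subrr mul0r !add0r dotv_eps_l; apply.
    rewrite /S1 mem_cat; apply/orP; left; apply/mapP; exists (val k) => //.
    by rewrite mem_iota leq0n add0n ltn_ord.
  + move=> j; rewrite -dotv_ones_l.
    have [j0|jn0] := eqVneq (val j) 0%N.
    * have ej : j = Ordinal d0 by apply: val_inj.
      have h1 := Hy (ones R r, 0); have h2 := Hy (- ones R r, 0).
      rewrite /= dotv0l dotv0r vmin_ones // subr0 mul1r add0r -ej in h1.
      rewrite /= dotv0l dotv0r vmin_Nones // subr0 mulN1r add0r -ej dotvNl in h2.
      rewrite h1 /=; last by rewrite /S1 !mem_cat !inE eqxx /= orbT.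
      rewrite -lerN2 opprD; apply: h2.
      by rewrite /S1 !mem_cat !inE eqxx /= !orbT.
    * have jin : val j \in iota 1 d.-1.
        by rewrite mem_iota add1n prednK // ltn_ord andbT lt0n.
      have h1 := Hy (ones R r, eps R d j); have h2 := Hy (- ones R r, - eps R d j).
      simpl in h1, h2; rewrite dotv_eps_l vmin_ones // dotv_ones_eps subrr mul0r addr0 in h1.
      rewrite dotvNl dotv_eps_l vmin_Nones // dotvNr dotv_ones_eps opprK in h2.
      rewrite addNr mul0r addr0 dotvNl -opprD lerN2 in h2.
      rewrite h1 /=; last first.
        rewrite /S1 !mem_cat; apply/orP; right; apply/orP; right.
        by apply/flatten_mapP; exists (val j) => //; rewrite inE eqxx.
      apply: h2; rewrite /S1 !mem_cat; apply/orP; right; apply/orP; right.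
      by apply/flatten_mapP; exists (val j) => //; rewrite !inE eqxx orbT.
- move=> [hu hw hj]; split => // pa /mapP [n /mapP [y hy ->] ->].
  split => //=; rewrite val_y //=.
  have hj' := fun j => hj j; move: hj'; rewrite -dotv_ones_l => hj'.
  move: hy; rewrite /S1 !mem_cat => /orP [/mapP [k]|/orP [|/flatten_mapP [k]]].
  + rewrite mem_iota add0n => /andP [_ kr] ->.
    rewrite /= dotv0l vmin_eps // dotv0r subrr mul0r !add0r.
    by rewrite (_ : eps R r k = eps R r (Ordinal kr)) // dotv_eps_l.
  + rewrite !inE => /orP [] /eqP ->.
      rewrite /= dotv0l dotv0r vmin_ones // subr0 mul1r add0r.
      by case/andP: (hj' (Ordinal d0)).
    rewrite /= dotv0l dotv0r vmin_Nones // subr0 mulN1r add0r dotvNl -opprD lerN2.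
    by case/andP: (hj' (Ordinal d0)).
  + rewrite mem_iota add1n => /andP [k1 kd].
    have kd' : (k < d)%N by rewrite -(prednK d0).
    rewrite !inE => /orP [] /eqP -> /=;
      rewrite (_ : eps R d k = eps R d (Ordinal kd')) //.
      rewrite dotv_eps_l vmin_ones // dotv_ones_eps subrr mul0r addr0.
      by case/andP: (hj' (Ordinal kd')).
    rewrite dotvNl dotv_eps_l vmin_Nones // dotvNr dotv_ones_eps opprK.
    rewrite addNr mul0r addr0 dotvNl -opprD lerN2.
    by case/andP: (hj' (Ordinal kd')).
Qed.

End Aux3.
Section Topo.
Variable R : realType.

Lemma fst_cont (T U : topologicalType) : continuous (@fst T U).
Proof. by move=> [x y]; exact: cvg_fst. Qed.

Lemma snd_cont (T U : topologicalType) : continuous (@snd T U).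
Proof. by move=> [x y]; exact: cvg_snd. Qed.

Lemma sum_cont (T : topologicalType) (I : Type) (s : seq I) (F : I -> T -> R^o) :
  (forall i, continuous (F i)) -> continuous (fun x => \sum_(i <- s) F i x).
Proof.
move=> hF; elim: s => [|a s IH].
  under eq_fun do rewrite big_nil; exact: cst_continuous.
under eq_fun do rewrite big_cons.
by move=> x; apply: continuousD; [exact: hF|exact: IH].
Qed.

Lemma bigmin_cont (T : topologicalType) (I : Type) (s : seq I) (F : I -> T -> R^o)
  (G : T -> R^o) :
  continuous G -> (forall i, continuous (F i)) ->
  continuous (fun x => \big[Num.min/G x]_(i <- s) F i x).
Proof.
move=> hG hF; elim: s => [|a s IH].
  by under eq_fun do rewrite big_nil.
under eq_fun do rewrite big_cons.
by move=> x; exact: (continuous_min (hF a x) (IH x)).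
Qed.

Lemma vmin_cont n : continuous (fun u : 'rV[R]_n => (vmin u : R^o)).
Proof.
rewrite /vmin; case: pickP => [j0 _|_ /=]; last exact: cst_continuous.
apply: bigmin_cont => [|i]; exact: coord_continuous.
Qed.

End Topo.
Section Compact.
Variable R : realType.
Variables d r : nat.
Hypotheses (d1 : (1 < d)%N) (r1 : (1 < r)%N).
Let d0 : (0 < d)%N. Proof. by apply: ltn_trans d1. Qed.
Let r0 : (0 < r)%N. Proof. by apply: ltn_trans r1. Qed.

Local Notation PT := ('rV[R]_d * 'rV[R]_r)%type.

Lemma Pset_PC : @Pset R d r = [set m | PC m].
Proof. by rewrite predeqE => m; exact: Pset_iff. Qed.

Lemma cont1 j : continuous (fun m : PT => (m.1 0 j : R^o)).
Proof.
move=> m; apply: (@continuous_comp _ _ _ fst (fun M : 'rV[R]_d => (M 0 j : R^o))).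
  exact: fst_cont.
exact: coord_continuous.
Qed.

Lemma cont2 j : continuous (fun m : PT => (m.2 0 j : R^o)).
Proof.
move=> m; apply: (@continuous_comp _ _ _ snd (fun M : 'rV[R]_r => (M 0 j : R^o))).
  exact: snd_cont.
exact: coord_continuous.
Qed.

Lemma contv : continuous (fun m : PT => (vmin m.1 : R^o)).
Proof.
move=> m; apply: (@continuous_comp _ _ _ fst (fun M : 'rV[R]_d => (vmin M : R^o))).
  exact: fst_cont.
exact: vmin_cont.
Qed.

Lemma contf j : continuous (fun m : PT => (m.1 0 j + \sum_k m.2 0 k : R^o)).
Proof.
move=> m; apply: (@continuousD _ _ _ (fun m : PT => (m.1 0 j : R^o))
   (fun m : PT => (\sum_k m.2 0 k : R^o))); first exact: cont1.
by apply: sum_cont => k; exact: cont2.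
Qed.

Lemma PC_closed : closed [set m : PT | PC m].
Proof.
have -> : [set m : PT | PC m] =
  ((fun m : PT => (vmin m.1 : R^o)) @^-1` [set x | x = 0]) `&`
  (\bigcap_(k in setT) ((fun m : PT => (m.2 0 k : R^o)) @^-1` [set x | -1 <= x])) `&`
  (\bigcap_(j in setT) (((fun m : PT => (m.1 0 j + \sum_k m.2 0 k : R^o))
        @^-1` [set x | -1 <= x]) `&`
     ((fun m : PT => (m.1 0 j + \sum_k m.2 0 k : R^o)) @^-1` [set x | x <= 1]))).
  rewrite predeqE => m; split.
    by move=> [h1 h2 h3]; split; [split|] => //= j _; [exact: h2|case/andP: (h3 j)].
  move=> [[h1 h2] h3]; split => // [k|j]; first exact: h2.
  by case: (h3 j I) => /= -> ->.
apply: closedI; first apply: closedI.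
- by apply: preimage_closed; [move=> m _; exact: contv|exact: closed_eq].
- apply: closed_bigI => k _.
  by apply: preimage_closed; [move=> m _; exact: cont2|exact: closed_ge].
- apply: closed_bigI => j _; apply: closedI.
    by apply: preimage_closed; [move=> m _; exact: contf|exact: closed_ge].
  by apply: preimage_closed; [move=> m _; exact: contf|exact: closed_le].
Qed.

Lemma PC_bound (m : PT) : PC m ->
  (forall j, -(r%:R) <= m.1 0 j <= r%:R) /\ (forall k, -(r%:R) <= m.2 0 k <= r%:R).
Proof.
case: m => u w; rewrite /PC => -[/= hu hw hj].
have [j0 hj0] := vmin_ex u d0.
have /andP [s1 s2] : -1 <= \sum_k w 0 k <= 1.
  by have := hj j0; rewrite -hj0 hu add0r.
have r2 : 2 <= r%:R :> R by rewrite (ler_nat R 2 r).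
split => [j|k].
  have := hj j => /andP [_ h]; have hj1 := vmin_le u j; rewrite hu in hj1.
  apply/andP; split; lra.
apply/andP; split; first by have := hw k; lra.
have : w 0 k + 1 <= \sum_l (w 0 l + 1).
  rewrite (bigD1 k) //= lerDl; apply: sumr_ge0 => l _.
  by rewrite -lerBlDr sub0r.
rewrite big_split /= sumr_const card_ord => h.
have : w 0 k + 1 <= 1 + r%:R.
  by apply: (le_trans h); rewrite lerD2r.
by rewrite addrC lerD2l.
Qed.

Lemma Pset_compact : compact (@Pset R d r).
Proof.
rewrite Pset_PC.
have c1 := rV_compact (A := fun (_ : 'I_d) => `[-(r%:R), (r%:R : R)]%classic) (fun _ => @segment_compact R _ _).
have c2 := rV_compact (A := fun (_ : 'I_r) => `[-(r%:R), (r%:R : R)]%classic) (fun _ => @segment_compact R _ _).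
have c3 := compact_setX c1 c2.
apply: (subclosed_compact PC_closed c3).
move=> m /PC_bound [h1 h2]; split => /= j; rewrite in_itv /=; [exact: h1|exact: h2].
Qed.

End Compact.
Section Conv.
Variable R : realType.

Lemma sum_delta_l n (F : 'I_n -> R) (l : 'I_n) : \sum_k F k * (k == l)%:R = F l.
Proof.
rewrite (bigD1 l) //= eqxx mulr1 big1 ?addr0 // => k /negbTE ->; by rewrite mulr0.
Qed.

Lemma sum_delta_r n (F : 'I_n -> R) (l : 'I_n) : \sum_k F k * (l == k)%:R = F l.
Proof. by rewrite -(sum_delta_l F l); apply: eq_bigr => k _; rewrite eq_sym. Qed.

Lemma sum_neq n (i : 'I_n) : \sum_(l : 'I_n) ((l != i)%:R : R) = n%:R - 1.
Proof.
have h : \sum_(l : 'I_n) ((l == i)%:R : R) = 1.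
  by apply: etrans (sum_delta_l (fun _ => (1 : R)) i); apply: eq_bigr => l _; rewrite mul1r.
rewrite (eq_bigr (fun l : 'I_n => 1 - ((l == i)%:R : R))); last by move=> l _; case: (l == i); rewrite /= ?subrr ?subr0.
by rewrite sumrB h sumr_const card_ord.
Qed.

Lemma entry_sum (I : Type) (s : seq I) m n (c : I -> R) (A : I -> 'M[R]_(m, n)) a b :
  (\sum_(p <- s) c p *: A p) a b = \sum_(p <- s) c p * A p a b.
Proof. by rewrite summxE; apply: eq_bigr => p _; rewrite mxE. Qed.

Lemma sum_delta_sc (V : lmodType R) n (F : 'I_n -> V) (kk : 'I_n) :
  \sum_k ((k == kk)%:R : R) *: F k = F kk.
Proof.
rewrite (bigD1 kk) //= eqxx scale1r big1 ?addr0 // => k /negbTE ->; by rewrite scale0r.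
Qed.

Variables d r : nat.
Local Notation PT := ('rV[R]_d * 'rV[R]_r)%type.

Lemma conv_mem (s : seq PT) p : p \in s -> Defs.conv s p.
Proof.
move=> ps; pose kk : 'I_(size s) := Ordinal (etrans (index_mem p s) ps).
exists (fun k => ((k == kk)%:R : R)); split.
  by move=> k; rewrite ler0n.
split; first by have := sum_delta_l (fun _ => (1 : R)) kk; under eq_bigr do rewrite mul1r.
by rewrite !sum_delta_sc /= nth_index // -surjective_pairing.
Qed.

Lemma conv_comb (s : seq PT) (I : finType) (mu : I -> R) (y : I -> PT) :
  (forall t, 0 <= mu t) -> \sum_t mu t = 1 -> (forall t, Defs.conv s (y t)) ->
  Defs.conv s (\sum_t mu t *: (y t).1, \sum_t mu t *: (y t).2).
Proof.
move=> h0 h1 hy; case: (choice hy) => L hL.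
exists (fun p => \sum_t mu t * L t p); split.
  by move=> p; apply: sumr_ge0 => t _; apply: mulr_ge0 => //; case: (hL t).
split.
  rewrite exchange_big /=; rewrite -[RHS]h1; apply: eq_bigr => t _.
  by rewrite -mulr_sumr; case: (hL t) => _ [-> _]; rewrite mulr1.
have e1 t : (y t).1 = \sum_p L t p *: (nth (0, 0) s p).1 by case: (hL t) => _ [_ ->].
have e2 t : (y t).2 = \sum_p L t p *: (nth (0, 0) s p).2 by case: (hL t) => _ [_ ->].
congr pair.
  under eq_bigr do rewrite e1 scaler_sumr; rewrite exchange_big /=.
  by apply: eq_bigr => p _; rewrite scaler_suml; apply: eq_bigr => t _; rewrite scalerA.
under eq_bigr do rewrite e2 scaler_sumr; rewrite exchange_big /=.
by apply: eq_bigr => p _; rewrite scaler_suml; apply: eq_bigr => t _; rewrite scalerA.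
Qed.

Definition Ci (i : 'I_r) (x : PT) : Prop :=
  [/\ x.2 0 i = 0, (forall j, -1 <= x.1 0 j <= 1), (forall k, -1 <= x.2 0 k) &
      -1 <= vmin x.1 - \sum_k x.2 0 k].

Lemma conv_Ci (i : 'I_r) (s : seq PT) x : (0 < d)%N ->
  (forall p, p \in s -> Ci i p) -> Defs.conv s x -> Ci i x.
Proof.
move=> d0 hs [l [l0 [l1 ->]]].
have hP (p : 'I_(size s)) : Ci i (nth (0, 0) s p) by apply: hs; apply: mem_nth.
have lb (F : 'I_(size s) -> R) c : (forall p, c <= F p) -> c <= \sum_p l p * F p.
  move=> hF; apply: (le_trans (y := \sum_p l p * c)).
    by rewrite -mulr_suml l1 mul1r.
  by apply: ler_sum => p _; apply: ler_wpM2l.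
split => /=.
- rewrite entry_sum big1 // => p _; by case: (hP p) => -> _ _ _; rewrite mulr0.
- move=> j; rewrite entry_sum; apply/andP; split.
    by apply: lb => p; case: (hP p) => _ /(_ j) /andP [].
  rewrite -lerN2; apply: (le_trans (y := \sum_p l p * (- (nth (0,0) s p).1 0 j))).
    by apply: lb => p; case: (hP p) => _ /(_ j) /andP [_]; rewrite lerN2.
  by rewrite -sumrN; apply: ler_sum => p _; rewrite mulrN.
- by move=> k; rewrite entry_sum; apply: lb => p; case: (hP p) => _ _ /(_ k).
- have hv : \sum_p l p * vmin (nth (0, 0) s p).1 <= vmin (\sum_p l p *: (nth (0, 0) s p).1).
    apply/vmin_geP => // j; rewrite entry_sum.
    by apply: ler_sum => p _; apply: ler_wpM2l => //; apply: vmin_le.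
  have hw : \sum_k (\sum_p l p *: (nth (0, 0) s p).2) 0 k =
            \sum_p l p * \sum_k (nth (0, 0) s p).2 0 k.
    under eq_bigr do rewrite entry_sum; rewrite exchange_big /=.
    by apply: eq_bigr => p _; rewrite mulr_sumr.
  rewrite hw; apply: (le_trans _ (lerB hv (lexx _))); rewrite -sumrB.
  under eq_bigr do rewrite -mulrBr.
  by apply: lb => p; case: (hP p).
Qed.

End Conv.
Section Chart.
Variable R : realType.
Variables d r : nat.
Hypotheses (d1 : (1 < d)%N) (r1 : (1 < r)%N).
Let d0 : (0 < d)%N. Proof. by apply: ltn_trans d1. Qed.
Let r0 : (0 < r)%N. Proof. by apply: ltn_trans r1. Qed.
Local Notation PT := ('rV[R]_d * 'rV[R]_r)%type.
Variable i : 'I_r.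

Lemma image_Ci : phi i @` (@Pset R d r) = [set x | Ci i x].
Proof.
rewrite Pset_PC //; rewrite predeqE => x; split.
- case=> m hm <-; case: m hm => u w; rewrite /PC => -[/= hu hw hj].
  rewrite /phi /=; split => /=.
  + by rewrite /zero_at mxE eqxx.
  + by move=> j; rewrite /ones !mxE mulr1 dotv_ones_l; exact: hj.
  + by move=> k; rewrite /zero_at mxE; case: ifP => // _; rewrite lerN10.
  + rewrite vmin_shift // hu add0r dotv_ones_l sum_zero_at opprB addrCA subrr addr0.
    exact: hw.
- case: x => x1 x2; rewrite /Ci => -[/= hx0 hxj hxk hxv].
  have e : dotv (ones R r) (x2 + (vmin x1 - dotv (ones R r) x2) *: eps R r i) = vmin x1.
    by rewrite dotvDr dotvZr dotv_ones_eps mulr1 addrCA subrr addr0.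
  exists (phiinv i (x1, x2)).
    rewrite /phiinv /=; split => /=.
    * by rewrite -scaleNr vmin_shift // subrr.
    * move=> k; rewrite !mxE; case: (eqVneq k i) => [->|/negbTE ki].
        by rewrite hx0 eqxx mulr1 add0r dotv_ones_l.
      have ki' : ((k : nat) == i) = false by exact: ki.
      by rewrite ki' mulr0 addr0.
    * move=> j; rewrite -dotv_ones_l e /ones !mxE mulr1 subrK; exact: hxj.
  rewrite /phi /phiinv /= e subrK; congr pair.
  apply/rowP => l; rewrite !mxE; case: (eqVneq l i) => [->|/negbTE li].
    by rewrite eqxx hx0.
  have li' : ((l : nat) == i) = false by exact: li.
  by rewrite li' mulr0 addr0.
Qed.

End Chart.
Section Vert.
Variable R : realType.
Variables d r : nat.
Hypotheses (d1 : (1 < d)%N) (r1 : (1 < r)%N).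
Let d0 : (0 < d)%N. Proof. by apply: ltn_trans d1. Qed.
Let r0 : (0 < r)%N. Proof. by apply: ltn_trans r1. Qed.
Local Notation PT := ('rV[R]_d * 'rV[R]_r)%type.
Variable i : 'I_r.

Definition cv (b : {ffun 'I_d -> bool}) : 'rV[R]_d := \row_j (if b j then 1 else -1).
Definition Wk (k : 'I_r) (a : R) : 'rV[R]_r :=
  \row_l ((k != i)%:R * (a + 1) * (l == k)%:R - (l != i)%:R).
Definition gg (v : 'rV[R]_d) : R := vmin v + r%:R - 1.
Definition vert b k : PT := (cv b, Wk k (gg (cv b))).
Definition sl : seq PT := [seq vert b k | b <- enum {ffun 'I_d -> bool}, k <- enum 'I_r].
Definition cube (v : 'rV[R]_d) := forall j, -1 <= v 0 j <= 1.

Lemma sum_Wk k a : \sum_l Wk k a 0 l = (k != i)%:R * (a + 1) - (r%:R - 1).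
Proof.
rewrite /Wk; under eq_bigr do rewrite mxE.
by rewrite sumrB (sum_delta_l (fun _ => (k != i)%:R * (a + 1))) sum_neq.
Qed.

Lemma nat_bool (b : bool) : (b%:R : R) = if b then 1 else 0.
Proof. by case: b. Qed.

Lemma Ci_pt v k : cube v -> Ci i (v, Wk k (gg v)).
Proof.
move=> hv; have hm : -1 <= vmin v by apply/vmin_geP => // j; case/andP: (hv j).
have r2 : 2 <= r%:R :> R by rewrite (ler_nat R 2 r).
split => //=.
- rewrite mxE !nat_bool eqxx /=; case: (k =P i) => [->|/eqP ki].
    by rewrite /= !mul0r subr0.
  by rewrite eq_sym (negbTE ki) /= mulr0 subr0.
- move=> l; rewrite mxE !nat_bool /gg.
  by case: (k != i); case: (l == k); case: (l != i); lra.
- rewrite sum_Wk nat_bool /gg; case: (k != i); lra.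
Qed.

Lemma cv_cube b : cube (cv b).
Proof. by move=> j; rewrite mxE; case: (b j); apply/andP; split; lra. Qed.

Lemma vert_props b k : Ci i (vert b k) /\ int_pt (vert b k).
Proof.
split; first exact: Ci_pt (cv_cube b).
have hv : vmin (cv b) \is a Num.int.
  by have [j ->] := vmin_ex (cv b) d0; rewrite mxE; case: (b j); rewrite ?rpredN rpred1.
split => /= j; rewrite mxE.
  by case: (b j); rewrite ?rpredN rpred1.
apply: rpredB; last exact: rpred_nat.
apply: rpredM; last exact: rpred_nat.
apply: rpredM; first exact: rpred_nat.
rewrite /gg; apply: rpredD; last exact: rpred1.
apply: rpredB; last exact: rpred1.
by apply: rpredD => //; exact: rpred_nat.
Qed.

Lemma sl_props p : p \in sl -> Ci i p /\ int_pt p.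
Proof. by case/allpairsP => -[b k] [_ _ ->]; exact: vert_props. Qed.

Definition JJ (v : 'rV[R]_d) := [pred j | -1 < v 0 j < 1].

Lemma base v k : cube v -> (forall j, ~~ JJ v j) -> Defs.conv sl (v, Wk k (gg v)).
Proof.
move=> hv hJ; pose b := [ffun j => 0 < v 0 j].
have -> : v = cv b.
  apply/rowP => j; rewrite /cv !mxE ffunE.
  have := hJ j; rewrite /JJ inE negb_and -!leNgt; have /andP [h1 h2] := hv j.
  by case: ifP => h /orP [] h3; lra.
apply: conv_mem; apply/allpairsP; exists (b, k); by rewrite !mem_enum.
Qed.

Lemma card_dec (v v' : 'rV[R]_d) j1 : (forall j, ~~ JJ v j -> v' 0 j = v 0 j) ->
  JJ v j1 -> ~~ JJ v' j1 -> (#|JJ v'| < #|JJ v|)%N.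
Proof.
move=> hs h1 h2; apply: proper_card; apply/properP; split; last by exists j1.
apply/fintype.subsetP => j; apply: contraLR => hj; rewrite /JJ !inE in hj *.
by rewrite hs.
Qed.

Lemma V_in n : forall v, (#|JJ v| <= n)%N -> cube v ->
  forall k, Defs.conv sl (v, Wk k (gg v)).
Proof.
elim: n => [|n IH] v hn hv k; (case: (pickP (JJ v)) => [j0 hj0|hno];
  last by apply: base => // j; rewrite hno).
  have : (0 < #|JJ v|)%N by apply/card_gt0P; exists j0; rewrite inE.
  by rewrite leqn0 in hn; rewrite (eqP hn).
case: (arg_maxP (fun j => v 0 j) hj0) => j1 hj1 hmax.
case: (arg_minP (fun j => v 0 j) hj0) => j2 hj2 hmin.
have hb j : JJ v j -> v 0 j <= v 0 j1 by move=> hj; exact: (hmax j hj).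
have ha j : JJ v j -> v 0 j2 <= v 0 j by move=> hj; exact: (hmin j hj).
have /andP [b1 b2] : -1 < v 0 j1 < 1 by [].
have /andP [a1 a2] : -1 < v 0 j2 < 1 by [].
have hJ j : JJ v j -> -1 < v 0 j /\ v 0 j < 1 by move=> /andP.
have ab := hb j2 hj2.
pose dp := 1 - v 0 j1; pose dm := v 0 j2 + 1.
have hdp : 0 < dp by rewrite /dp; lra.
have hdm : 0 < dm by rewrite /dm; lra.
pose oneJ : 'rV[R]_d := \row_j ((JJ v j)%:R : R).
pose vp := v + dp *: oneJ; pose vm := v - dm *: oneJ.
have evp j : vp 0 j = if JJ v j then v 0 j + dp else v 0 j.
  rewrite /vp /oneJ !mxE; case: (JJ v j); rewrite /= ?mulr1n ?mulr0n ?mulr1 ?mulr0 ?addr0 //.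
have evm j : vm 0 j = if JJ v j then v 0 j - dm else v 0 j.
  rewrite /vm /oneJ !mxE; case: (JJ v j); rewrite /= ?mulr1n ?mulr0n ?mulr1 ?mulr0 ?subr0 //.
clearbody vp vm.
have cp : cube vp.
  move=> j; rewrite evp; have /andP [h1 h2] := hv j.
  case hj: (JJ v j); last by apply/andP.
  have := hb j hj; have [h3 h4] := hJ j hj; rewrite /dp => h5; apply/andP; split; lra.
have cm : cube vm.
  move=> j; rewrite evm; have /andP [h1 h2] := hv j.
  case hj: (JJ v j); last by apply/andP.
  have := ha j hj; have [h3 h4] := hJ j hj; rewrite /dm => h5; apply/andP; split; lra.
have np : (#|JJ vp| <= n)%N.
  rewrite -ltnS; apply: leq_trans hn; apply: (card_dec (j1 := j1)) => //.
    by move=> j /negbTE hj; rewrite evp hj.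
  by rewrite inE evp hj1 /dp addrC subrK ltxx andbF.
have nm : (#|JJ vm| <= n)%N.
  rewrite -ltnS; apply: leq_trans hn; apply: (card_dec (j1 := j2)) => //.
    by move=> j /negbTE hj; rewrite evm hj.
  rewrite inE evm hj2 (_ : v 0 j2 - dm = -1) ?ltxx //; rewrite /dm; lra.
pose lam := dm / (dp + dm).
have hvm : vmin v = lam * vmin vp + (1 - lam) * vmin vm.
  case: (pickP [pred j | v 0 j == -1]) => [ja /eqP hja|hno'].
    have hnJ : JJ v ja = false by rewrite inE hja ltxx.
    have e1 : vmin v = -1.
      by apply: (vmin_eq (j:=ja)) => // l; case/andP: (hv l).
    have e2 : vmin vp = -1.
      by apply: (vmin_eq (j:=ja)) => [l|]; [case/andP: (cp l)|rewrite evp hnJ].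
    have e3 : vmin vm = -1.
      by apply: (vmin_eq (j:=ja)) => [l|]; [case/andP: (cm l)|rewrite evm hnJ].
    by rewrite e1 e2 e3; ring.
  have hv1 l : JJ v l = false -> v 0 l = 1.
    move=> hl; have := hno' l; rewrite /= => /negbT hl1.
    have /andP [h1 h2] := hv l; move: hl; rewrite inE => /negbT.
    rewrite negb_and -!leNgt => /orP [] h3; last lra.
    by move: hl1; rewrite (_ : v 0 l = -1) ?eqxx //; lra.
  have e1 : vmin v = v 0 j2.
    apply: (vmin_eq (j:=j2)) => // l; case hl: (JJ v l); first exact: ha.
    by rewrite (hv1 l hl); lra.
  have e2 : vmin vp = v 0 j2 + dp.
    apply: (vmin_eq (j:=j2)) => [l|]; last by rewrite evp hj2.
    rewrite evp; case hl: (JJ v l); first by have := ha l hl; lra.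
    by rewrite (hv1 l hl) /dp; lra.
  have e3 : vmin vm = v 0 j2 - dm.
    apply: (vmin_eq (j:=j2)) => [l|]; last by rewrite evm hj2.
    rewrite evm; case hl: (JJ v l); first by have := ha l hl; lra.
    by rewrite (hv1 l hl) /dm; lra.
  by rewrite e1 e2 e3 /lam; field; lra.
have := conv_comb (mu := fun t : bool => if t then lam else 1 - lam)
  (y := fun t : bool => if t then (vp, Wk k (gg vp)) else (vm, Wk k (gg vm))).
rewrite !big_bool /=.
have -> : lam *: vp + (1 - lam) *: vm = v.
  apply/rowP => j; rewrite !mxE evp evm; case: (JJ v j); rewrite /lam; field; lra.
have -> : lam *: Wk k (gg vp) + (1 - lam) *: Wk k (gg vm) = Wk k (gg v).
  apply/rowP => l; rewrite !mxE /gg hvm /lam; field; lra.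
apply.
- case; rewrite /lam; first by apply: divr_ge0; lra.
  rewrite (_ : 1 - dm / (dp + dm) = dp / (dp + dm)); first by apply: divr_ge0; lra.
  by field; lra.
- by rewrite addrC subrK.
- by case; apply: IH.
Qed.

Lemma sum_neq_mul n (j : 'I_n) (F : 'I_n -> R) :
  \sum_k (k != j)%:R * F k = \sum_k F k - F j.
Proof.
rewrite (bigD1 j) //= [in RHS](bigD1 j) //= eqxx mul0r add0r addrAC subrr add0r.
by apply: eq_bigr => k kj; rewrite kj mul1r.
Qed.

Lemma Ci_conv x : Ci i x -> Defs.conv sl x.
Proof.
case: x => v w; rewrite /Ci => -[/= hx0 hxj hxk hxv].
have hm : -1 <= vmin v by apply/vmin_geP => // j; case/andP: (hxj j).
have r2 : 2 <= r%:R :> R by rewrite (ler_nat R 2 r).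
pose G := gg v + 1.
have hG : 0 < G by rewrite /G /gg; lra.
pose S := \sum_l w 0 l.
have hS : S <= vmin v + 1 by rewrite /S; lra.
pose c := 1 - (S + (r%:R - 1)) / G.
pose mu := fun k : 'I_r => (k != i)%:R * (w 0 k + 1) / G + c * (k == i)%:R.
have hsum : \sum_k mu k = 1.
  rewrite /mu big_split /= -mulr_suml sum_neq_mul (sum_delta_l (fun _ => c)).
  rewrite big_split /= sumr_const card_ord hx0 add0r /c -/S.
  by field; lra.
have h0 k : 0 <= mu k.
  rewrite /mu; case: (eqVneq k i) => [->|ki].
    rewrite !nat_bool /= mul0r mul0r add0r mulr1.
    rewrite (_ : c = (G - (S + (r%:R - 1))) / G); last by rewrite /c; field; lra.
    by apply: divr_ge0; rewrite /G /gg; lra.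
  rewrite !nat_bool /= mul1r mulr0 addr0; apply: divr_ge0; last lra.
  by have := hxk k; lra.
have := conv_comb (mu := mu) (y := fun k => (v, Wk k (gg v))) h0 hsum (fun k => V_in (leqnn _) hxj k).
rewrite /= -scaler_suml hsum scale1r.
suff -> : \sum_t mu t *: Wk t (gg v) = w by [].
apply/rowP => l; rewrite entry_sum.
rewrite (eq_bigr (fun k => (mu k * ((k != i)%:R * (gg v + 1))) * (l == k)%:R - mu k * (l != i)%:R));
  last by move=> k _; rewrite !mxE; ring.
rewrite sumrB (sum_delta_r (fun k => mu k * ((k != i)%:R * (gg v + 1)))) -mulr_suml hsum mul1r.
case: (eqVneq l i) => [->|li]; first by rewrite !nat_bool /= mul0r mulr0 subr0 hx0.
rewrite /mu !nat_bool (negbTE li) /= mulr0 addr0 !mul1r -/G.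
by field; lra.
Qed.

End Vert.
Section Final.
Variable R : realType.

Lemma is_point_vrd r d (y : 'rV[R]_r * 'rV[R]_d) : (0 < d)%N -> (0 < r)%N ->
  int_pt y -> is_point (vrd (phiinv 0 y)).
Proof.
move=> d0 r0 [h1 h2]; rewrite vrd_phiinv //.
have hv : vmin y.1 \is a Num.int by have [j ->] := vmin_ex y.1 r0; exact: h1.
have hs : dotv (ones R d) y.2 \is a Num.int.
  by rewrite dotv_ones_l; apply: rpred_sum => j _; exact: h2.
split; first split => //= j.
  rewrite !mxE; apply: rpredD; first exact: h2.
  by apply: rpredM; [exact: rpredB|exact: rpred_nat].
rewrite /inT /= dotvDr dotvZr [dotv _ (eps _ _ _)]dotv_ones_l (@sum_eps R _ _ d0) mulr1.
by rewrite addrCA subrr addr0.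
Qed.

Lemma S1_int r d (y : 'rV[R]_r * 'rV[R]_d) : y \in S1 R r d -> int_pt y.
Proof.
have ie n k : int_vec (eps R n k) by move=> j; rewrite mxE rpred_nat.
have io n : int_vec (ones R n) by move=> j; rewrite mxE rpred1.
have iN n (x : 'rV[R]_n) : int_vec x -> int_vec (- x) by move=> h j; rewrite mxE rpredN.
have i0 n : int_vec (0 : 'rV[R]_n) by move=> j; rewrite mxE rpred0.
rewrite /S1 !mem_cat => /orP [/mapP [k _ ->]|/orP [|/flatten_mapP [k _]]].
- by split; [apply: ie|apply: i0].
- by rewrite !inE => /orP [] /eqP ->; split; try apply: iN; [apply: io|apply: i0|apply: io|apply: i0].
- by rewrite !inE => /orP [] /eqP ->; split; try apply: iN; [apply: io|apply: ie|apply: io|apply: ie].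
Qed.

End Final.

Theorem mainTheorem18 (R : realType) (d r : nat) (hd : (2 <= d)%N) (hr : (2 <= r)%N) :
  compact (@Pset R d r) /\
  (forall i : 'I_r, lattice_polytope (phi (R := R) i @` @Pset R d r)) /\
  integral_PL_polytope (@Pset R d r) /\
  chart_GF (@Pset R d r).
Proof.
have d0 : (0 < d)%N by apply: ltn_trans hd.
have r0 : (0 < r)%N by apply: ltn_trans hr.
have hcomp : compact (@Pset R d r) := Pset_compact hd hr.
have hlat : forall i : 'I_r, lattice_polytope (phi (R := R) i @` @Pset R d r).
  move=> i; exists (sl R d i); split; first by move=> x /(sl_props hd hr) [].
  rewrite image_Ci // predeqE => x; split; first exact: Ci_conv.
  by apply: conv_Ci => // p /(sl_props hd hr) [].
have hL : forall pa, pa \in [seq (vrd n, -1 : R) | n <- Sset R r d] ->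
    is_point pa.1 /\ pa.2 \is a Num.int.
  move=> pa /mapP [n /mapP [y hy ->] ->] /=; split; last by rewrite rpredN rpred1.
  by apply: is_point_vrd => //; exact: S1_int.
have hPL : integral_PL_polytope (@Pset R d r).
  split => //; split => //; exists [seq (vrd n, -1 : R) | n <- Sset R r d]; split => //.
split => //; split => //; split => //; split => //.
exists [seq vrd n | n <- Sset R r d]; split.
  by move=> p /mapP [n hn ->]; have := hL (vrd n, -1); rewrite map_f //; case.
by rewrite -map_comp.
Qed.
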